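(* Let $v\ge 2$ be an integer and $\theta\in[0,1]$. In the tipsy cop and drunken robber game on the complete graph $K_v$ with cop and robber starting at distinct vertices, let $X$ be the capture time, i.e. the number of the move at which the capture occurs. Then \[ \mathbb{E}[X]=\frac{(2v-3)(v-1)}{(v-1)^2-\theta(v-2)^2}. \]
   Context: Tipsy cop and drunken robber game on a finite connected graph $G$: a cop and a robber are placed at distinct vertices. Moves are numbered $1,2,3,\dots$; the robber makes the odd-numbered moves and the cop the even-numbered moves, and on each move the mover must move to a vertex adjacent to its current vertex (staying put is not allowed). The robber always moves to a neighbor chosen uniformly at random. The cop, independently at each of her moves, with probability $\theta$ moves to a neighbor chosen uniformly at random, and with probability $1-\theta$ makes a directed move to a neighbor lying on a shortest path to the robber's current vertex (in particular onto the robber's vertex if it is adjacent). All random choices are independent. The robber is captured (and the game ends) as soon as both occupy the same vertex, whether the robber moves onto the cop or the cop moves onto the robber. *)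

(* Defs.v *)
From HB Require Import structures.
From mathcomp Require Import all_boot all_order all_algebra.
From mathcomp Require Import all_classical all_reals all_analysis.
Set Implicit Arguments. Unset Strict Implicit. Unset Printing Implicit Defensive.
Import Order.TTheory GRing.Theory Num.Theory.
Local Open Scope ring_scope.

Section TipsyCop.
Variables (R : realType) (T : finType) (e : rel T) (theta : R).

Fixpoint within (k : nat) (x y : T) : bool :=
  match k with
  | 0 => x == y
  | k'.+1 => within k' x y || [exists z, e x z && within k' z y]
  end.

(* graph distance (for a connected finite graph it is < #|T|) *)
Definition gdist (x y : T) : nat := find (fun k => within k x y) (iota 0 #|T|).

Definition nbrs (x : T) : {set T} := [set y | e x y].
Definition deg (x : T) : nat := #|nbrs x|.

Definition dirnbrs (c r : T) : {set T} :=
  [set y | e c y & (gdist y r).+1 == gdist c r].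

(* A sub-probability mass on uncaptured positions (cop, robber). *)
Definition robber_step (p : T * T -> R) : T * T -> R :=
  fun s => \sum_(r : T) p (s.1, r) * ((e r s.2)%:R / (deg r)%:R).

Definition cop_step (p : T * T -> R) : T * T -> R :=
  fun s => \sum_(c : T) p (c, s.2) *
     (theta * ((e c s.1)%:R / (deg c)%:R) +
      (1 - theta) * ((s.1 \in dirnbrs c s.2)%:R / #|dirnbrs c s.2|%:R)).

Definition move_step (m : nat) (p : T * T -> R) : T * T -> R :=
  if odd m then robber_step p else cop_step p.

Definition kill_captured (p : T * T -> R) : T * T -> R :=
  fun s => if s.1 == s.2 then 0 else p s.

Fixpoint alive (c0 r0 : T) (n : nat) : T * T -> R :=
  match n with
  | 0 => fun s => (s == (c0, r0))%:R
  | n'.+1 => kill_captured (move_step n (alive c0 r0 n'))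
  end.

Definition capture_prob (c0 r0 : T) (m : nat) : R :=
  match m with
  | 0 => 0
  | m'.+1 => \sum_(x : T) move_step m (alive c0 r0 m') (x, x)
  end.

Definition expected_capture_time (c0 r0 : T) : \bar R :=
  (\sum_(m <oo) ((m%:R * capture_prob c0 r0 m)%:E))%E.

End TipsyCop.

Definition complete_rel (v : nat) : rel 'I_v := fun i j => i != j.

(* Main.v *)
Require Import Defs.
From HB Require Import structures.
From mathcomp Require Import all_boot all_order all_algebra.
From mathcomp Require Import all_classical all_reals all_analysis.
From mathcomp Require Import ring lra zify.
Import Order.TTheory GRing.Theory Num.Theory numFieldNormedType.Exports.
Local Open Scope ring_scope.

Section Abs.
Local Open Scope classical_set_scope.
Variables (R : realType) (p q : R).
Hypotheses (p0 : 0 < p) (p1 : p <= 1) (q0 : 0 <= q) (q1 : q <= 1).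
Definition rho m := if odd m then p else q.
Variables (M cp : nat -> R).
Hypotheses (M0 : M 0 = 1) (MS : forall N, M N.+1 = (1 - rho N.+1) * M N)
  (cp0 : cp 0 = 0) (cpS : forall N, cp N.+1 = rho N.+1 * M N).

Definition a : R := (1 - p) * (1 - q).
Definition L : R := (2 - p) / (1 - a).

Let rho01 m : 0 <= rho m <= 1.
Proof. rewrite /rho; case: odd; apply/andP; split=> //; exact: ltW. Qed.

Let Mge0 N : 0 <= M N.
Proof.
elim: N => [|N IH]; first by rewrite M0.
rewrite MS mulr_ge0 // subr_ge0; by case/andP: (rho01 N.+1).
Qed.

Let M2 N : M N.+2 = a * M N.
Proof.
rewrite !MS /a /rho /=; case: (odd N) => /=; ring.
Qed.

Let cp2 N : cp N.+3 = a * cp N.+1.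
Proof. rewrite !cpS M2 /rho /=; case: (odd N) => /=; ring. Qed.

Ltac hyps := move: (p0) (p1) (q0) (q1) => ????.
Let a0 : 0 <= a.
Proof. hyps; rewrite /a; nra. Qed.
Let a1 : a < 1.
Proof. hyps; rewrite /a; nra. Qed.

Definition cs N := \sum_(0 <= m < N) cp m.
Definition us N := \sum_(0 <= m < N) m%:R * cp m.

Let csE N : cs N.+1 = 1 - M N.
Proof.
elim: N => [|N IH].
  by rewrite /cs big_nat1 cp0 M0 subrr.
rewrite /cs big_nat_recr //= -/(cs N.+1) IH cpS MS; ring.
Qed.

Let usS N : us N.+1 = us N + N%:R * cp N.
Proof. by rewrite /us big_nat_recr. Qed.

Let usrec N : us N.+3 = p + 2 * q * (1 - p) + a * us N.+1 + 2 * a * (1 - M N).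
Proof.
elim: N => [|N IH].
  rewrite !usS /us big_nil !cpS cp0 M0 MS M0 /rho /=; ring.
rewrite usS IH (usS N.+1) cp2 cpS MS.
have -> : (N.+3)%:R = N.+1%:R + 2 :> R by rewrite -natrD addn2.
ring.
Qed.

Let us_ge L0 : 0 <= L0 -> (forall N, us N <= L0 -> us N.+2 <= L0) -> True.
Proof. by []. Qed.

Let Lfix : L = p + 2 * q * (1 - p) + a * L + 2 * a.
Proof.
have ha : 1 - a != 0 by rewrite subr_eq0 gt_eqF.
move: ha; rewrite /L /a => ha; field.
exact: ha.
Qed.

Let cpge0 N : 0 <= cp N.
Proof. case: N => [|N]; first by rewrite cp0. rewrite cpS mulr_ge0 //; by case/andP: (rho01 N.+1). Qed.

Let us_nd : nondecreasing_seq us.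
Proof.
apply/nondecreasing_seqP => N; rewrite usS lerDl mulr_ge0 //.
Qed.

Let M_ni : nonincreasing_seq M.
Proof.
apply/nonincreasing_seqP => N; rewrite MS.
have := Mge0 N; have := rho01 N.+1; move=> /andP[h1 h2] h3.
nra.
Qed.

Let us_le N : us N <= L /\ us N.+1 <= L /\ us N.+2 <= L.
Proof.
have hL : p + 2 * q * (1 - p) + a * L + 2 * a = L by rewrite -Lfix.
have pL : p <= L.
  rewrite /L ler_pdivlMr; last by rewrite subr_gt0.
  have := a0; hyps; nra.
elim: N => [|N [_ [h1 h2]]].
  rewrite /us !big_nat_recr //= big_nil cp0 !mul0r !add0r mul1r cpS M0 /rho /=.
  rewrite mulr1; split; first by rewrite (le_trans (ltW p0)).
  by split; first by rewrite (le_trans (ltW p0)).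
split => //; split => //.
rewrite usrec; rewrite -[X in _ <= X]hL; apply: lerD.
  by rewrite lerD2l ler_wpM2l.
have := Mge0 N; have := a0; move=> h3 h4; nra.
Qed.

Lemma abs_main : us @ \oo --> L.
Proof.
have cu : cvgn us.
  apply: (nondecreasing_is_cvgn us_nd); exists L => _ [n _ <-]; by case: (us_le n).
have cM : cvgn M.
  apply: (nonincreasing_is_cvgn M_ni); exists 0 => _ [n _ <-]; exact: Mge0.
set l := limn us in cu *; set m := limn M in cM *.
have m0 : m = 0.
  have h1 : (fun n => M (n + 2)%N) @ \oo --> m by rewrite -(cvg_shiftn 2) in cM.
  have h2 : (fun n => M (n + 2)%N) @ \oo --> a * m.
    under eq_fun do rewrite addn2 M2.
    exact: cvgMl_tmp.
  have e := cvg_unique (@Rhausdorff R) h1 h2.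
  have e' : (m : R) * (1 - a) = 0.
    rewrite mulrBr mulr1 [m * a]mulrC -e; exact: subrr.
  move/eqP: e'; rewrite mulf_eq0 => /orP[/eqP //|]; rewrite subr_eq0 => /eqP h.
  by move: a1; rewrite -h ltxx.
have Ml : M @ \oo --> 0 by rewrite -m0.
have h1 : (fun n => us (n + 3)%N) @ \oo --> l by rewrite -(cvg_shiftn 3) in cu.
have h1' : (fun n => us (n + 1)%N) @ \oo --> l by rewrite -(cvg_shiftn 1) in cu.
have h2 : (fun n => us (n + 3)%N) @ \oo --> p + 2 * q * (1 - p) + a * l + 2 * a * (1 - 0).
  under eq_fun do rewrite addn3 usrec.
  apply: cvgD; first apply: cvgD.
  - exact: cvg_cst.
  - apply: cvgMl_tmp. under eq_fun do rewrite -addn1. exact: h1'.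
  - apply: cvgMl_tmp. apply: cvgB => //. exact: cvg_cst.
have e := cvg_unique (@Rhausdorff R) h1 h2.
have hl : (l : R) - L = a * (l - L).
  rewrite [in LHS]e [in LHS]Lfix subr0 mulr1; ring.
have e' : ((l : R) - L) * (1 - a) = 0.
  rewrite mulrBr mulr1 [_ * a]mulrC -hl; exact: subrr.
move/eqP: e'; rewrite mulf_eq0 => /orP[|]; last first.
  by rewrite subr_eq0 => /eqP h; move: a1; rewrite -h ltxx.
rewrite subr_eq0 => /eqP <-; exact: cu.
Qed.

End Abs.

Lemma pairE (R : realType) (T : finType) (F : T * T -> R) :
  \sum_(s : T * T) F s = \sum_(i : T) \sum_(j : T) F (i, j).
Proof. by rewrite pair_big; apply: eq_bigr => -[i j]. Qed.

Section Game.
Variables (R : realType) (v : nat) (theta : R).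
Hypotheses (v2 : (2 <= v)%N) (th0 : 0 <= theta) (th1 : theta <= 1).
Definition nn : R := (v - 1)%:R.
Notation e := (@complete_rel v).

Lemma nn_gt0 : 0 < nn.
Proof. by rewrite /nn ltr0n subn_gt0. Qed.

Lemma nn_neq0 : nn != 0.
Proof. by rewrite gt_eqF // nn_gt0. Qed.

Lemma deg_c (r : 'I_v) : (deg e r)%:R = nn.
Proof.
rewrite /deg /nbrs.
have -> : [set y | e r y] = [set~ r] by apply/finset.setP => y; rewrite !inE /complete_rel eq_sym.
by rewrite cardsC1 card_ord /nn subn1.
Qed.

Lemma sum_neq (r : 'I_v) : \sum_(r' : 'I_v) (r != r')%:R = nn :> R.
Proof.
rewrite (bigD1 r) //= eqxx add0r.
rewrite (eq_bigr (fun _ => 1)); last by move=> i ir; rewrite eq_sym ir.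
by rewrite sumr_const cardC1 card_ord /nn subn1.
Qed.

Lemma iotaE : iota 0 #|'I_v| = 0%N :: 1%N :: iota 2 (v - 2).
Proof. by rewrite card_ord -{1}(subnKC v2). Qed.

Lemma gdist_eq (x : 'I_v) : gdist e x x = 0%N.
Proof. by rewrite /gdist iotaE /= eqxx. Qed.

Lemma gdist_neq (x y : 'I_v) : x != y -> gdist e x y = 1%N.
Proof.
move=> xy; rewrite /gdist iotaE /= (negbTE xy) /=.
have -> : [exists z, e x z && (z == y)] by apply/existsP; exists y; rewrite eqxx andbT.
by [].
Qed.

Lemma dir_neq (c r : 'I_v) : c != r -> dirnbrs e c r = [set r].
Proof.
move=> cr; apply/finset.setP => y; rewrite !inE (gdist_neq _ _ cr) eqSS.
case: (eqVneq y r) => [->|yr]; first by rewrite gdist_eq /complete_rel cr.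
by rewrite gdist_neq // andbF.
Qed.

Definition qq : R := theta / nn + (1 - theta).

Section Steps.
Variable P : 'I_v * 'I_v -> R.
Hypothesis Pd : forall x, P (x, x) = 0.

Lemma robber_mass : \sum_s robber_step e P s = \sum_s P s.
Proof.
rewrite /robber_step pairE [RHS]pairE; apply: eq_bigr => c _ /=.
rewrite exchange_big; apply: eq_bigr => r _ /=.
rewrite -big_distrr /= -mulr_suml deg_c sum_neq divff ?nn_neq0 //.
by rewrite mulr1.
Qed.

Lemma cop_mass : \sum_s cop_step e theta P s = \sum_s P s.
Proof.
rewrite /cop_step pairE [RHS]pairE exchange_big [RHS]exchange_big.
apply: eq_bigr => y _ /=; rewrite exchange_big; apply: eq_bigr => c _ /=.
rewrite -big_distrr /=.
case: (eqVneq c y) => [->|cy]; first by rewrite Pd !mul0r.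
rewrite big_split /= -!big_distrr /= -!mulr_suml deg_c sum_neq divff ?nn_neq0 //.
rewrite dir_neq // cards1 divr1.
have -> : \sum_(i : 'I_v) (i \in [set y])%:R = 1 :> R.
  rewrite (bigD1 y) //= inE eqxx big1 ?addr0 // => x xy; by rewrite inE (negbTE xy).
by rewrite !mulr1 addrC subrK mulr1.
Qed.

Lemma robber_cap : \sum_x robber_step e P (x, x) = nn^-1 * \sum_s P s.
Proof.
rewrite /robber_step pairE big_distrr; apply: eq_bigr => x _ /=.
rewrite big_distrr; apply: eq_bigr => r _ /=.
rewrite deg_c /complete_rel.
case: (eqVneq r x) => [->|rx]; first by rewrite Pd !mul0r mulr0.
by rewrite mul1r mulrC.
Qed.

Lemma cop_cap : \sum_x cop_step e theta P (x, x) = qq * \sum_s P s.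
Proof.
rewrite /cop_step pairE exchange_big big_distrr; apply: eq_bigr => x _ /=.
rewrite big_distrr; apply: eq_bigr => c _ /=.
case: (eqVneq c x) => [->|cx]; first by rewrite Pd !mul0r mulr0.
have xc : x != c by rewrite eq_sym.
rewrite deg_c /complete_rel xc dir_neq // cards1 inE eqxx divr1 /qq.
rewrite mulrC; congr (_ * _); rewrite mul1r mulr1 //.
Qed.

End Steps.
End Game.

Section Main.
Variables (R : realType) (v : nat) (theta : R) (c0 r0 : 'I_v).
Hypotheses (v2 : (2 <= v)%N) (th0 : 0 <= theta) (th1 : theta <= 1) (cr : c0 != r0).
Notation e := (@complete_rel v).
Definition MM N := \sum_s alive e theta c0 r0 N s.
Definition cpp := capture_prob e theta c0 r0.

Lemma alive_diag N x : alive e theta c0 r0 N (x, x) = 0.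
Proof.
case: N => [|N] /=.
  case: (eqVneq (x, x) (c0, r0)) => [[h1 h2]|] //.
  by move: cr; rewrite -h1 -h2 eqxx.
by rewrite /kill_captured /= eqxx.
Qed.

Lemma kill_sum (Q : 'I_v * 'I_v -> R) :
  \sum_s kill_captured Q s = \sum_s Q s - \sum_x Q (x, x).
Proof.
apply/eqP; rewrite eq_sym subr_eq; apply/eqP.
rewrite !pairE -big_split; apply: eq_bigr => c _ /=.
rewrite (bigD1 c) //= [X in _ = X + _](bigD1 c) //= /kill_captured /= eqxx add0r.
rewrite addrC; congr (_ + _); apply: eq_bigr => y /negbTE; by rewrite eq_sym => ->.
Qed.

Lemma step_mass m P : (forall x, P (x, x) = 0) ->
  \sum_s move_step e theta m P s = \sum_s P s.
Proof.
move=> Pd; rewrite /move_step; case: odd; first exact: robber_mass.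
exact: cop_mass.
Qed.

Lemma step_cap m P : (forall x, P (x, x) = 0) ->
  \sum_x move_step e theta m P (x, x) = rho R (nn R v)^-1 (qq R v theta) m * \sum_s P s.
Proof.
move=> Pd; rewrite /move_step /rho; case: odd.
  exact: robber_cap.
exact: cop_cap.
Qed.

Lemma MM0 : MM 0 = 1.
Proof.
rewrite /MM /= (bigD1 (c0, r0)) //= eqxx big1 ?addr0 // => s /negbTE.
by move=> ->.
Qed.

Lemma MMS N : MM N.+1 = (1 - rho R (nn R v)^-1 (qq R v theta) N.+1) * MM N.
Proof.
rewrite /MM [alive _ _ _ _ N.+1]/= kill_sum step_mass; last exact: alive_diag.
rewrite step_cap; last exact: alive_diag.
by rewrite mulrBl mul1r.
Qed.

Lemma cppS N : cpp N.+1 = rho R (nn R v)^-1 (qq R v theta) N.+1 * MM N.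
Proof. by rewrite /cpp /= step_cap //; exact: alive_diag. Qed.

End Main.

Lemma final_val (R : realType) (v : nat) (theta : R) :
  (2 <= v)%N -> 0 <= theta -> theta <= 1 ->
  L R (nn R v)^-1 (qq R v theta) =
  ((2 * v - 3)%:R * (v - 1)%:R) / ((v - 1)%:R ^+ 2 - theta * (v - 2)%:R ^+ 2).
Proof.
move=> v2 th0 th1.
have hk1 : (v - 1 = (v - 2).+1)%N by lia.
have hk2 : (2 * v - 3 = (v - 2).+1 + (v - 2))%N by lia.
rewrite /L /a /qq /nn hk1 hk2 natrD -!natr1.
set k : R := (v - 2)%:R.
have k0 : 0 <= k by rewrite /k ler0n.
have hk : k + 1 != 0 by rewrite gt_eqF // ltr_wpDl.
have hd : (k + 1) ^+ 2 - theta * k ^+ 2 != 0.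
  have h : 0 < (k + 1) ^+ 2 - theta * k ^+ 2 by move: k0 th0 th1 => ? ? ?; nra.
  by rewrite gt_eqF.
have hd2 : 1 - (1 - (k + 1)^-1) * (1 - (theta / (k + 1) + (1 - theta))) =
   ((k + 1) ^+ 2 - theta * k ^+ 2) / (k + 1) ^+ 2.
  by field.
rewrite hd2.
field.
by rewrite hd hk.
Qed.

Theorem mainTheorem2 (R : realType) (v : nat) (theta : R) (c0 r0 : 'I_v) :
  (2 <= v)%N -> 0 <= theta -> theta <= 1 -> c0 != r0 ->
  expected_capture_time (@complete_rel v) theta c0 r0 =
  (((2 * v - 3)%:R * (v - 1)%:R) /
     ((v - 1)%:R ^+ 2 - theta * (v - 2)%:R ^+ 2))%:E.
Proof.
move=> v2 th0 th1 cr.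
rewrite -final_val //.
have hn := nn_gt0 R v v2.
have n1 : 1 <= nn R v by rewrite /nn ler1n subn_gt0.
have p0 : 0 < (nn R v)^-1 by rewrite invr_gt0.
have p1 : (nn R v)^-1 <= 1 by rewrite invf_le1.
have tn : theta / nn R v <= theta.
  rewrite ler_pdivrMr //; move: n1 th0 => ? ?; nra.
have q0 : 0 <= qq R v theta by rewrite /qq; move: tn th0 th1 => ? ? ?; apply: addr_ge0; [apply: divr_ge0 => //; exact: ltW | lra].
have q1 : qq R v theta <= 1 by rewrite /qq; move: tn th0 th1 => ? ? ?; lra.
have H := @abs_main R _ _ p0 p1 q0 q1 (MM R v theta c0 r0) (cpp R v theta c0 r0) (MM0 R v theta c0 r0) (MMS R v theta c0 r0 v2 cr)
  (erefl : cpp R v theta c0 r0 0 = 0) (cppS R v theta c0 r0 v2 cr).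
have HL := cvg_lim (@Rhausdorff R) H.
have cu := cvgP _ H.
rewrite -HL -(EFin_lim cu).
rewrite /expected_capture_time; congr lim; f_equal.
apply: funext => N; rewrite /= sumEFin /us /cpp //.
all: try exact: fmap_proper_filter.
Qed.
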